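(* Let $0<q<1$, $p,l\in\mathbb{Z}_+$ and $x\in\mathbb{C}$. Then $$p_l(x;1,1;q)\,(q^{1-p}x;q)_p=\sum_{m=0}^l\frac{q^{m(m-l+p)}(q;q)_{l+m}}{(q;q)_{l-m}(q;q)_m^2}\,p_{l-m}(q^p;q^m,q^m;q)\,(q^{1-p-m}x;q)_{p+m}.$$
   Context: $(a;q)_n=\prod_{j=0}^{n-1}(1-aq^j)$. Little $q$-Jacobi polynomial: $p_n(x;a,b;q)=\sum_{k=0}^n\frac{(q^{-n};q)_k(q^{n+1}ab;q)_k}{(qa;q)_k(q;q)_k}(qx)^k$. *)

(* Defs.v *)
From HB Require Import structures.
From mathcomp Require Import all_boot all_order all_algebra.
From mathcomp Require Import reals.
From mathcomp Require Import complex.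
Set Implicit Arguments. Unset Strict Implicit. Unset Printing Implicit Defensive.
Import Order.TTheory GRing.Theory Num.Theory.
Local Open Scope ring_scope.

Definition qpoch (F : fieldType) (a q : F) (n : nat) : F :=
  \prod_(j < n) (1 - a * q ^+ j).

Definition little_qJacobi (F : fieldType) (n : nat) (x a b q : F) : F :=
  \sum_(k < n.+1)
    qpoch (q ^- n) q k * qpoch (q ^+ n.+1 * a * b) q k
      / (qpoch (q * a) q k * qpoch q q k) * (q * x) ^+ k.

(* Main.v *)
Require Import Defs.
From HB Require Import structures.
From mathcomp Require Import all_boot all_order all_algebra.
From mathcomp Require Import reals.
From mathcomp Require Import complex.
From mathcomp Require Import zify ring lra.
Import Order.TTheory GRing.Theory Num.Theory.
Local Open Scope ring_scope.

Lemma qpochS (F : fieldType) (q : F) a n : qpoch a q n.+1 = qpoch a q n * (1 - a * q ^+ n).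
Proof. by rewrite /qpoch big_ord_recr. Qed.

Lemma qpoch0 (F : fieldType) (q : F) a : qpoch a q 0 = 1.
Proof. by rewrite /qpoch big_ord0. Qed.

Lemma qpochD (F : fieldType) (q : F) a m n : qpoch a q (m + n) = qpoch a q m * qpoch (a * q ^+ m) q n.
Proof.
rewrite /qpoch big_split_ord /=; congr (_ * _); apply: eq_bigr => i _.
by rewrite exprD mulrA.
Qed.

Section Gen.
Variable (F : fieldType) (q : F).
Hypothesis hq0 : q != 0.
Hypothesis hq1 : forall n, q ^+ n.+1 != 1.

Lemma qpoch_neq0 k n : qpoch (q ^+ k.+1) q n != 0.
Proof.
elim: n => [|n IH]; first by rewrite qpoch0 oner_neq0.
rewrite qpochS mulf_neq0 // -exprD subr_eq0 eq_sym addSn; exact: hq1.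
Qed.

Lemma qpochq_neq0 n : qpoch q q n != 0.
Proof. by have := qpoch_neq0 0 n; rewrite expr1. Qed.

Fixpoint qbin (k m : nat) : F :=
  match k, m with
  | _, 0 => 1
  | 0, _.+1 => 0
  | k'.+1, m'.+1 => qbin k' m' + q ^+ m'.+1 * qbin k' m'.+1
  end.

Lemma qbin_gt k m : (k < m)%N -> qbin k m = 0.
Proof.
elim: k m => [|k IH] [|m] //= H.
rewrite (IH m) // (IH m.+1) ?mulr0 ?add0r //; exact: ltnW.
Qed.

Lemma qbin_fact n : forall m d, (m + d = n)%N ->
  qbin n m * qpoch q q m * qpoch q q d = qpoch q q n.
Proof.
elim: n => [|n IH] [|m] d //=.
- by move=> /eqP; rewrite addn_eq0 => /andP[_ /eqP->]; rewrite !qpoch0 !mulr1.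
- by move=> <-; rewrite !qpoch0 !mul1r.
- move=> [Hn].
  case: d Hn => [|d] Hn.
  + rewrite addn0 in Hn; subst m.
    rewrite (@qbin_gt n n.+1 (ltnSn n)) mulr0 addr0 qpoch0 mulr1.
    have := IH n 0 (addn0 n); rewrite qpoch0 mulr1 => H.
    by rewrite qpochS mulrA H.
  + have H1 := IH m d.+1 Hn.
    have H2 := IH m.+1 d (etrans (addSnnS m d) Hn).
    rewrite mulrDl mulrDl.
    rewrite !qpochS in H1 H2 *.
    set P := qpoch q q n in H1 H2 *.
    set A := qbin n m; set B := qbin n m.+1; set Pm := qpoch q q m; set Pd := qpoch q q d.
    have -> : A * (Pm * (1 - q * q ^+ m)) * (Pd * (1 - q * q ^+ d)) +
      q ^+ m.+1 * B * (Pm * (1 - q * q ^+ m)) * (Pd * (1 - q * q ^+ d))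
      = (A * Pm * (Pd * (1 - q * q ^+ d))) * (1 - q * q ^+ m) +
        (B * (Pm * (1 - q * q ^+ m)) * Pd) * (q * q ^+ m * (1 - q * q ^+ d)) by rewrite exprS; ring.
    rewrite H1 H2 -Hn exprD exprS; ring.
Qed.

Definition sgn m : F := \prod_(i < m) (- q ^+ i).

Lemma sgnS m : sgn m.+1 = sgn m * (- q ^+ m).
Proof. by rewrite /sgn big_ord_recr. Qed.

Lemma sgn0 : sgn 0 = 1.
Proof. by rewrite /sgn big_ord0. Qed.

Lemma qbin_0 k : qbin k 0 = 1.
Proof. by case: k. Qed.

Lemma qexp (r : F) (hr : q * r = 1) k y :
  y ^+ k = \sum_(m < k.+1) sgn m * qbin k m * qpoch y r m.
Proof.
elim: k => [|k IH].
  by rewrite big_ord1 sgn0 qbin_0 qpoch0 !mul1r expr0.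
have key m : y * (sgn m * qbin k m * qpoch y r m) =
   sgn m * qbin k m * q ^+ m * qpoch y r m - sgn m * qbin k m * q ^+ m * qpoch y r m.+1.
  rewrite qpochS.
  have h : q ^+ m * r ^+ m = 1 by rewrite -exprMn hr expr1n.
  transitivity (sgn m * qbin k m * qpoch y r m * y * (q ^+ m * r ^+ m)); first by rewrite h mulr1; ring.
  ring.
rewrite exprS IH big_distrr /=.
under eq_bigr => i _ do rewrite key.
rewrite sumrB.
have -> : \sum_(m < k.+2) sgn m * qbin k.+1 m * qpoch y r m =
   1 + \sum_(i < k.+1) (sgn i * qbin k i * q ^+ i * qpoch y r i.+1 * (-1)
     + sgn i.+1 * qbin k i.+1 * q ^+ i.+1 * qpoch y r i.+1).
  rewrite big_ord_recl sgn0 qbin_0 qpoch0 !mul1r; congr (_ + _).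
  by apply: eq_bigr => i _; rewrite lift0 /= sgnS; ring.
rewrite big_split /= -big_distrl /= mulrN1 [X in 1 + X]addrC addrA; congr (_ + _).
rewrite [in RHS]big_ord_recr /= (@qbin_gt k k.+1) // mulr0 !mul0r addr0.
rewrite big_ord_recl sgn0 qpoch0 !mul1r expr0 mulr1 qbin_0.
by rewrite mulr1; congr (_ + _); apply: eq_bigr => i _; rewrite lift0.
Qed.

Lemma qbin_split m j : qbin (m + j) m = qpoch (q ^+ m.+1) q j / qpoch q q j.
Proof.
have := @qbin_fact (m + j)%N m j erefl; rewrite qpochD -exprS => H.
apply: (mulIf (qpochq_neq0 j)); rewrite divfK ?qpochq_neq0 //.
apply: (mulfI (qpochq_neq0 m)); rewrite -H; ring.
Qed.

Lemma cst p d m : sgn m * q ^+ m * (q ^+ p) ^+ m * qpoch (q ^- (m + d)) q m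
   * qpoch (q ^+ (m + d).+1) q m * q ^+ ((m + d) * m)
   = q ^+ (m * m + p * m) * qpoch q q (m + d + m) / qpoch q q d.
Proof.
elim: m d => [|m IH] d.
  rewrite sgn0 !qpoch0 !expr0 !mul0n !muln0 !addn0 !expr0 !mul1r add0n divff //.
  exact: qpochq_neq0.
have E := IH d.+1.
rewrite addSnnS.
set L := (m + d.+1)%N in E *.
rewrite qpochS in E.
rewrite sgnS !qpochS addnS qpochS mulnS exprD.
have -> : (m.+1 * m.+1 + p * m.+1 = (m * m + p * m) + (m + m + 1 + p))%N by nia.
set X := sgn m * q ^+ m * (q ^+ p) ^+ m * qpoch (q ^- L) q m * qpoch (q ^+ L.+1) q m * q ^+ (L * m).
apply: (@eq_trans _ _ (X * ((- q ^+ m) * q * q ^+ p * (1 - q ^- L * q ^+ m)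
     * (1 - q ^+ L.+1 * q ^+ m) * q ^+ L))).
  rewrite /X !exprS; ring.
rewrite /X E /L.
have h1 : 1 - q * q ^+ d != 0 by rewrite -exprS subr_eq0 eq_sym.
have h2 := qpochq_neq0 d.
rewrite !exprD !exprS !exprD expr0 mulr1 !exprS.
have ha : q ^+ m != 0 by apply: expf_neq0.
have hb : q ^+ d != 0 by apply: expf_neq0.
move: h1 h2 ha hb.
move: (q ^+ m) (q ^+ d) (q ^+ p) (q ^+ (m * m)) (q ^+ (p * m)) (qpoch q q (m + d.+1 + m)) (qpoch q q d) => a b c e f g k h1 h2 ha hb.
field.
by rewrite h1 h2 ha hb hq0.
Qed.

Lemma qpos (n : nat) : q ^+ n = q ^ (n%:Z). Proof. by []. Qed.

Lemma erev (z : int) m x : qpoch (q ^ (z - m%:Z) * x) q m = qpoch (q ^ (z - 1) * x) q^-1 m.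
Proof.
rewrite /qpoch (reindex_inj rev_ord_inj) /=; apply: eq_bigr => i _.
rewrite exprVn exprnN qpos -!mulrA ![x * _]mulrC !mulrA -!expfzDr //.
congr (1 - q ^ _ * x).
have hi := ltn_ord i.
lia.
Qed.

Lemma term_id p l m j e : (m <= l)%N ->
  qpoch (q ^- l) q (j + m) * qpoch (q ^+ l.+1 * 1 * 1) q (j + m)
    / (qpoch (q * 1) q (j + m) * qpoch q q (j + m)) * (q * q ^+ p) ^+ (j + m)
    * (sgn m * qbin (j + m) m * e)
  = q ^ (m%:Z * (m%:Z - l%:Z + p%:Z)) * qpoch q q (l + m) / (qpoch q q (l - m) * qpoch q q m ^+ 2)
    * (qpoch (q ^- (l - m)) q j * qpoch (q ^+ (l - m).+1 * q ^+ m * q ^+ m) q j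
         / (qpoch (q * q ^+ m) q j * qpoch q q j) * (q * q ^+ p) ^+ j) * e.
Proof.
move=> hml; have hl := subnKC hml.
move: (l - m)%N hl => d hl; rewrite -hl.
have hz : q ^ (m%:Z * (m%:Z - (m + d)%:Z + p%:Z)) = q ^+ (m * m + p * m) / q ^+ ((m + d) * m).
  rewrite !qpos exprnN -expfzDr //; congr (q ^ _); lia.
rewrite hz.
have rel := cst p d m.
set W := qpoch q q (m + d + m) in rel *.
rewrite !mulr1 !(addnC j m) ![qpoch _ q (m + j)]qpochD qbin_split -exprS.
have -> : q ^+ d.+1 * q ^+ m * q ^+ m = q ^+ (m + d).+1 * q ^+ m by rewrite -addnS exprD; ring.
have -> : q ^- (m + d) * q ^+ m = q ^- d by rewrite exprD invfM mulrAC mulVf ?mul1r // expf_neq0.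
rewrite [(q * q ^+ p) ^+ (m + j)]exprD [(q * q ^+ p) ^+ m]exprMn.
have hU : q ^+ (m * m + p * m) = sgn m * q ^+ m * q ^+ p ^+ m * qpoch (q ^- (m + d)) q m *
    qpoch (q ^+ (m + d).+1) q m * q ^+ ((m + d) * m) * qpoch q q d / W.
  rewrite rel divfK ?qpochq_neq0 // mulfK // /W; exact: qpochq_neq0.
rewrite hU; clear hU rel hz.
have n1 : q ^+ ((m + d) * m) != 0 by apply: expf_neq0.
have n2 : W != 0 by rewrite /W; exact: qpochq_neq0.
have n3 := qpochq_neq0 d.
have n4 := qpochq_neq0 m.
have n5 := qpoch_neq0 m j.
have n6 := qpochq_neq0 j.
move: n1 n2 n3 n4 n5 n6.
move: (q ^+ ((m + d) * m)) W (qpoch q q d) (qpoch q q m) (qpoch (q ^+ m.+1) q j) (qpoch q q j)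
  => a1 a2 a3 a4 a5 a6 n1 n2 n3 n4 n5 n6.
field.
by rewrite n1 n2 n3 n4 n5 n6.
Qed.

Lemma widen_q l (k : 'I_l.+1) (e : nat -> F) :
  \sum_(m < k.+1) sgn m * qbin k m * e m = \sum_(m < l.+1) sgn m * qbin k m * e m.
Proof.
rewrite (big_ord_widen l.+1 (fun m => sgn m * qbin k m * e m) (ltn_ord k)) big_mkcond; apply: eq_bigr => i _.
case: ifP => // /negbT; rewrite -leqNgt => hi.
by rewrite qbin_gt // mulr0 mul0r.
Qed.

Lemma shift_sum l m (f : nat -> F) : (m <= l)%N -> (forall k, (k < m)%N -> f k = 0) ->
  \sum_(k < l.+1) f k = \sum_(j < (l - m).+1) f (j + m)%N.
Proof.
move=> hml hz.
rewrite -(big_mkord xpredT f) (big_cat_nat (leq0n m) (leqW hml)) /=.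
rewrite big_nat_cond big1 ?add0r; last by move=> k /andP[/andP[_ hk] _]; exact: hz.
by rewrite -{1}(add0n m) big_addn subSn // big_mkord.
Qed.

Theorem main_gen p l x :
  little_qJacobi l x 1 1 q * qpoch (q ^ (1 - p%:Z) * x) q p
  = \sum_(m < l.+1)
      q ^ (m%:Z * (m%:Z - l%:Z + p%:Z)) * qpoch q q (l + m)
        / (qpoch q q (l - m) * qpoch q q m ^+ 2)
      * little_qJacobi (l - m) (q ^+ p) (q ^+ m) (q ^+ m) q
      * qpoch (q ^ (1 - p%:Z - m%:Z) * x) q (p + m).
Proof.
set y := q ^ (- p%:Z) * x.
have E1 (m : nat) : qpoch (q ^ (1 - p%:Z - m%:Z) * x) q (p + m)
    = qpoch y q^-1 m * qpoch (q ^ (1 - p%:Z) * x) q p.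
  rewrite addnC qpochD erev; congr (qpoch _ _ _ * qpoch _ _ _).
    congr (_ * x); congr (q ^ _); lia.
  rewrite mulrAC qpos -expfzDr //; congr (q ^ _ * x); lia.
under eq_bigr do rewrite E1 mulrA.
rewrite -big_distrl /=; congr (_ * _).
have hqx : q * x = q * q ^+ p * y.
  have h1 : q ^+ p * q ^ (- p%:Z) = 1 by rewrite qpos -expfzDr // subrr expr0z.
  by rewrite /y mulrA -(mulrA q) h1 mulr1.
have hr : q * q^-1 = 1 by rewrite divff.
rewrite /little_qJacobi.
rewrite hqx.
under [in LHS]eq_bigr => k _ do rewrite exprMn (qexp _ hr k y) (widen_q l k (qpoch y q^-1)) big_distrr /= big_distrr /=.
rewrite exchange_big /=; apply: eq_bigr => m _.
rewrite big_distrr big_distrl /=.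
rewrite (@shift_sum l m (fun i => qpoch (q ^- l) q i * qpoch (q ^+ l.+1 * 1 * 1) q i
   / (qpoch (q * 1) q i * qpoch q q i) * ((q * q ^+ p) ^+ i * (sgn m * qbin i m * qpoch y q^-1 m))));
  last 2 first.
- by rewrite -ltnS.
- by move=> k hk; rewrite qbin_gt // mulr0 mul0r !mulr0.
apply: eq_bigr => j _.
rewrite mulrA; apply: term_id; by rewrite -ltnS.
Qed.
End Gen.
Local Open Scope complex_scope.

Theorem mainTheorem5 (R : realType) (q : R) (p l : nat) (x : R[i]) :
  0 < q -> q < 1 ->
  let Q : R[i] := q%:C in
  little_qJacobi l x 1 1 Q * qpoch (Q ^ (1 - p%:Z) * x) Q p
  = \sum_(m < l.+1)
      Q ^ (m%:Z * (m%:Z - l%:Z + p%:Z)) * qpoch Q Q (l + m)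
        / (qpoch Q Q (l - m) * qpoch Q Q m ^+ 2)
      * little_qJacobi (l - m) (Q ^+ p) (Q ^+ m) (Q ^+ m) Q
      * qpoch (Q ^ (1 - p%:Z - m%:Z) * x) Q (p + m).
Proof.
move=> h0 h1 Q.
have hQ0 : (0 : R[i]) < Q by rewrite /Q ltcR.
have hQ1 : Q < 1 by rewrite /Q ltcR.
have n0 : Q != 0 by rewrite (gt_eqF hQ0).
have n1 : forall n, Q ^+ n.+1 != 1.
  move=> n; have h : Q ^+ n.+1 < 1 by rewrite exprn_ilt1 ?ltW.
  by rewrite (lt_eqF h).
exact: (@main_gen _ Q n0 n1 p l x).

Qed.
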